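(* Let $(L_i)_{i\in\mathbb Z}$ be integers with $L_i\ge1$ and $|L_i-L_{i+1}|\le1$ for all $i$. Let $(x_i)_{i\in\mathbb Z}$ be real numbers. For each $i$, define $y_i(k)$ for $0\le k\le L_i$ by $y_i(0)=\frac{1}{2L_i+1}x_i$; $y_i(1)=y_i(0)+y_{i-1}(0)+y_{i+1}(0)$; $y_i(2)=y_i(1)+(y_{i-1}(1)-y_{i-1}(0))+(y_{i+1}(1)-y_{i+1}(0))-2y_i(0)$ (if $L_i\ge2$); and for $2\le k\le L_i-1$, $y_i(k+1)=y_i(k)+(y_{i-1}(k)-y_{i-1}(k-1))+(y_{i+1}(k)-y_{i+1}(k-1))-(y_i(k-1)-y_i(k-2))$. Then all quantities used in these updates are defined, and for every $i$, $$y_i(L_i)=\frac{1}{2L_i+1}x_i+\sum_{j=1}^{L_i}\Big(\frac{1}{2L_{i-j}+1}x_{i-j}+\frac{1}{2L_{i+j}+1}x_{i+j}\Big).$$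
   Context: Sensors indexed by $i\in\mathbb Z$ on a line, each with time-invariant measurement $x_i$, individual window parameter $L_i$, and consensus variable $y_i(k)$; communication only with immediate neighbors $i\pm1$. *)

(* Defs.v *)
From Stdlib Require Import Reals Lra Lia ZArith.
Open Scope R_scope.

Definition wmeas (L : Z -> nat) (x : Z -> R) (i : Z) : R :=
  x i / (2 * INR (L i) + 1).

(* y : Z -> nat -> R satisfies the update rules of the protocol, on the
   domain 0 <= k <= L_i of each sensor i (values outside are irrelevant). *)
Definition satisfies_updates (L : Z -> nat) (x : Z -> R) (y : Z -> nat -> R) : Prop :=
  (forall i, y i 0%nat = wmeas L x i) /\
  (forall i, (1 <= L i)%nat ->
     y i 1%nat = y i 0%nat + y (i - 1)%Z 0%nat + y (i + 1)%Z 0%nat) /\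
  (forall i, (2 <= L i)%nat ->
     y i 2%nat = y i 1%nat + (y (i - 1)%Z 1%nat - y (i - 1)%Z 0%nat)
                 + (y (i + 1)%Z 1%nat - y (i + 1)%Z 0%nat) - 2 * y i 0%nat) /\
  (forall i (k : nat), (2 <= k)%nat -> (k <= L i - 1)%nat ->
     y i (S k) = y i k + (y (i - 1)%Z k - y (i - 1)%Z (k - 1)%nat)
                 + (y (i + 1)%Z k - y (i + 1)%Z (k - 1)%nat)
                 - (y i (k - 1)%nat - y i (k - 2)%nat)).

(* Main.v *)
Require Import Defs.
From Stdlib Require Import Reals ZArith Lra Lia.
Open Scope R_scope.

Fixpoint Sf (L : Z -> nat) (x : Z -> R) (i : Z) (k : nat) : R :=
  match k with
  | O => wmeas L x i
  | S k' => Sf L x i k' + wmeas L x (i - Z.of_nat (S k'))%Z + wmeas L x (i + Z.of_nat (S k'))%Z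
  end.

Lemma wm_eq L x (a b : Z) : a = b -> wmeas L x a = wmeas L x b.
Proof. intros ->; reflexivity. Qed.

Lemma Sf_sat L x : satisfies_updates L x (Sf L x).
Proof.
  unfold satisfies_updates. split; [|split; [|split]].
  - intros i; reflexivity.
  - intros i _. simpl. lra.
  - intros i _. simpl.
    rewrite (wm_eq L x (i - 1 - 1) (i - 2)) by lia.
    rewrite (wm_eq L x (i + 1 + 1) (i + 2)) by lia.
    rewrite (wm_eq L x (i - 1 + 1) i) by lia.
    rewrite (wm_eq L x (i + 1 - 1) i) by lia.
    lra.
  - intros i k Hk _.
    destruct k as [|[|m]]; [lia|lia|].
    replace (S (S m) - 1)%nat with (S m) by lia.
    replace (S (S m) - 2)%nat with m by lia.
    cbn [Sf].
    rewrite (wm_eq L x (i - Z.of_nat (S (S (S m)))) (i - 1 - Z.of_nat (S (S m)))) by lia.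
    rewrite (wm_eq L x (i + Z.of_nat (S (S (S m)))) (i + 1 + Z.of_nat (S (S m)))) by lia.
    rewrite (wm_eq L x (i - 1 + Z.of_nat (S (S m))) (i + Z.of_nat (S m))) by lia.
    rewrite (wm_eq L x (i + 1 - Z.of_nat (S (S m))) (i - Z.of_nat (S m))) by lia.
    lra.
Qed.

Lemma Sf_sum L x i m :
  Sf L x i (S m) = wmeas L x i +
    sum_f 1 (S m) (fun j => wmeas L x (i - Z.of_nat j)%Z + wmeas L x (i + Z.of_nat j)%Z).
Proof.
  unfold sum_f. replace (S m - 1)%nat with m by lia.
  induction m.
  - simpl. lra.
  - cbn [Sf sum_f_R0]. cbn [Sf] in IHm. rewrite IHm.
    rewrite Nat.add_1_r. lra.
Qed.

Theorem mainTheorem4 (L : Z -> nat) (x : Z -> R)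
  (HL1 : forall i : Z, (1 <= L i)%nat)
  (HL2 : forall i : Z, (Z.abs (Z.of_nat (L i) - Z.of_nat (L (i + 1)%Z)) <= 1)%Z) :
  (* all quantities used are defined: computing y_i(k+1) (k+1 <= L_i) only
     uses y_{i-1}, y_{i+1} at times <= k, which are within their domains *)
  (forall (i : Z) (k : nat), (S k <= L i)%nat ->
     (k <= L (i - 1)%Z)%nat /\ (k <= L (i + 1)%Z)%nat) /\
  (* the recursion can be carried out *)
  (exists y : Z -> nat -> R, satisfies_updates L x y) /\
  (* and its outcome is the windowed sum *)
  (forall y : Z -> nat -> R, satisfies_updates L x y ->
     forall i : Z,
       y i (L i) = wmeas L x i +
         sum_f 1 (L i) (fun j => wmeas L x (i - Z.of_nat j)%Z
                                 + wmeas L x (i + Z.of_nat j)%Z)).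
Proof.
  assert (Hdom : forall (i : Z) (k : nat), (S k <= L i)%nat ->
     (k <= L (i - 1)%Z)%nat /\ (k <= L (i + 1)%Z)%nat).
  { intros i k Hk. pose proof (HL2 i) as A. pose proof (HL2 (i-1)%Z) as B.
    replace (i - 1 + 1)%Z with i in B by lia. split; lia. }
  split; [exact Hdom|]. split; [exists (Sf L x); apply Sf_sat|].
  intros y [H0 [H1 [H2 H3]]].
  assert (Key : forall n k i, (k <= n)%nat -> (k <= L i)%nat -> y i k = Sf L x i k).
  { induction n as [|n IH]; intros k i Hkn Hki.
    - replace k with 0%nat by lia. apply H0.
    - destruct (Nat.le_gt_cases k n) as [Hk|Hk]; [now apply IH|].
      replace k with (S n) in * by lia. clear Hk Hkn.
      destruct n as [|[|m]].
      + rewrite H1 by lia. rewrite !H0.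
        pose proof (Sf_sat L x) as [_ [S1 _]]. rewrite S1 by lia. reflexivity.
      + rewrite H2 by lia.
        destruct (Hdom i 1%nat Hki) as [Da Db].
        rewrite (IH 1%nat i) by lia. rewrite (IH 1%nat (i-1)%Z) by lia.
        rewrite (IH 1%nat (i+1)%Z) by lia. rewrite !H0.
        pose proof (Sf_sat L x) as [_ [_ [S2 _]]]. rewrite S2 by lia. reflexivity.
      + rewrite H3 by lia.
        destruct (Hdom i (S (S m)) Hki) as [Da Db].
        replace (S (S m) - 1)%nat with (S m) by lia.
        replace (S (S m) - 2)%nat with m by lia.
        rewrite (IH (S (S m)) i) by lia. rewrite (IH (S m) i) by lia.
        rewrite (IH m i) by lia.
        rewrite (IH (S (S m)) (i-1)%Z) by lia. rewrite (IH (S m) (i-1)%Z) by lia.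
        rewrite (IH (S (S m)) (i+1)%Z) by lia. rewrite (IH (S m) (i+1)%Z) by lia.
        pose proof (Sf_sat L x) as [_ [_ [_ S3]]].
        specialize (S3 i (S (S m))).
        replace (S (S m) - 1)%nat with (S m) in S3 by lia.
        replace (S (S m) - 2)%nat with m in S3 by lia.
        symmetry; apply S3; lia. }
  intros i. rewrite (Key (L i) (L i) i) by lia.
  pose proof (HL1 i). destruct (L i) as [|m] eqn:E; [lia|]. apply Sf_sum.
Qed.
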